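(* Let $C$ be a field of characteristic zero, let $P(x,y)\in C[x,y]$ be a polynomial with $\deg_yP=d$, and let $R(x)=\operatorname{Res}_y(P,P_y)$. Assume that $\alpha\in\bar C$ is a root of $R(x)$ of multiplicity $k$. Then the squarefree part \[ S(y)=P(\alpha,y)\big/\gcd\bigl(P(\alpha,y),P_y(\alpha,y)\bigr) \] of $P(\alpha,y)$ has degree at least $d-k$.
   Context: $P_y$ is the partial derivative of $P$ with respect to $y$, and $\operatorname{Res}_y$ is the resultant with respect to $y$ (determinant of the Sylvester matrix). *)

(* Defs.v *)
From HB Require Import structures.
From mathcomp Require Import all_boot all_order all_algebra.
Set Implicit Arguments. Unset Strict Implicit. Unset Printing Implicit Defensive.
Import GRing.Theory.
Local Open Scope ring_scope.

(* A bivariate polynomial P(x,y) is represented as P : {poly {poly C}}: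
   the outer variable is y, the coefficients are polynomials in x.
   [evalx iota a P] is P(a, y) in L[y], where iota : C -> L is the
   embedding of C into the (algebraically closed) field L. *)
Definition evalx (C L : fieldType) (iota : {rmorphism C -> L}) (a : L)
    (P : {poly {poly C}}) : {poly L} :=
  map_poly (fun q : {poly C} => (map_poly iota q).[a]) P.

(* Main.v *)
Require Import Defs.
From HB Require Import structures.
From mathcomp Require Import all_boot all_order all_algebra.
From mathcomp Require Import zify.
Import GRing.Theory.
Local Open Scope ring_scope.

Lemma detA (L : fieldType) n (M : 'M[{poly L}]_n) (a : L) :
  ('X - a%:P) ^+ (n - \rank (map_mx (horner_eval a) M)) %| \det M.
Proof.
set A := map_mx (horner_eval a) M; set r := \rank A.
set V := invmx (row_ebase A).
have uV : V \in unitmx by rewrite unitmx_inv row_ebase_unit.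
set M' := M *m map_mx polyC V.
have AV : A *m V = col_ebase A *m pid_mx r.
  by rewrite -{1}(mulmx_ebase A) mulmxK ?row_ebase_unit.
have eM' : map_mx (horner_eval a) M' = A *m V.
  rewrite map_mxM; congr (_ *m _); apply/matrixP => i j.
  by rewrite !mxE; apply: hornerC.
have rootM' (i j : 'I_n) : (r <= j)%N -> root (M' i j) a.
  move=> hj; apply/eqP.
  rewrite -[_.[a]]/(horner_eval a (M' i j)).
  move/matrixP: eM' => /(_ i j); rewrite mxE => ->.
  rewrite AV mxE big1 // => l _; rewrite mxE.
  case: eqP => [el|]; last by rewrite andFb mulr0.
  by rewrite el ltnNge hj mulr0.
set q := 'X - a%:P.
set B := \matrix_(i, j) (if (r <= j)%N then M' i j %/ q else M' i j).
set D := diag_mx (\row_(j < n) (if (r <= j)%N then q else 1)).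
have eBD : M' = B *m D.
  apply/matrixP => i j; rewrite mul_mx_diag [RHS]mxE /B /D [X in X * _]mxE [X in _ * X]mxE.
  case: ifP => hj; last by rewrite mulr1.
  by rewrite divpK // dvdp_XsubCl rootM'.
have detD : \det D = q ^+ (n - r).
  rewrite det_diag.
  rewrite (eq_bigr (fun j : 'I_n => if (r <= j)%N then q else 1)); last by move=> j _; rewrite mxE.
  rewrite -big_mkcond /= -(big_mkord (fun j => r <= j)%N (fun _ => q)).
  transitivity (\prod_(r <= j < n) q); last by rewrite prodr_const_nat.
  by rewrite [RHS](big_nat_widenl _ 0).
have detV : \det (map_mx polyC V) = (\det V)%:P by rewrite det_map_mx.
have nzV : \det V != 0 by rewrite -unitfE -unitmxE.
have -> : \det M = \det M' * (\det V)^-1%:P.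
  by rewrite det_mulmx detV -mulrA -polyCM divff // mulr1.
by apply: dvdp_mulr; rewrite eBD det_mulmx detD dvdp_mull.
Qed.

Lemma rankB (L : fieldType) m n K (S : 'M[L]_(m,n)) (g : {poly L})
  (h : 'I_m -> {poly L}) :
  (forall i, size (h i) <= K)%N -> (forall i j, S i j = (g * h i)`_j) ->
  (\rank S <= K)%N.
Proof.
move=> hs hS.
set H := \matrix_(i < m, l < K) (h i)`_l.
set T := \matrix_(l < K, j < n) (g * 'X^l)`_j.
have -> : S = H *m T.
  apply/matrixP => i j; rewrite hS mxE.
  have eh : h i = \sum_(l < K) (h i)`_l *: 'X^l.
    rewrite -poly_def; apply/polyP => l; rewrite coef_poly.
    case: ltnP => // hl; rewrite nth_default //; exact: leq_trans (hs i) hl.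
  rewrite {1}eh mulr_sumr coef_sum; apply: eq_bigr => l _.
  by rewrite !mxE -scalerAr coefZ.
exact: leq_trans (mxrankM_maxl _ _) (rank_leq_col _).
Qed.

Theorem lemma13 (C : fieldType) (L : closedFieldType)
    (iota : {rmorphism C -> L})
    (charC0 : [pchar C] =i pred0)
    (P : {poly {poly C}}) (d : nat) (hdeg : size P = d.+1)
    (alpha : L) (k : nat) (hk : (0 < k)%N)
    (hdiv : ('X - alpha%:P) ^+ k %| map_poly iota (resultant P P^`()))
    (hndiv : ~~ (('X - alpha%:P) ^+ k.+1 %| map_poly iota (resultant P P^`()))) :
  let Pa := evalx iota alpha P in
  let S := Pa %/ gcdp Pa Pa^`() in
  (d - k <= (size S).-1)%N.
Proof.
change (d - k <= (size ((evalx iota alpha P %/ gcdp (evalx iota alpha P) (evalx iota alpha P)^`())%R)).-1)%N.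
set Pa := evalx iota alpha P; set S := Pa %/ _.
have [d0|d_gt0] := posnP d; first by rewrite d0 sub0n.
pose phi : {rmorphism {poly C} -> L} := horner_eval alpha \o map_poly iota.
have ePa : Pa = map_poly phi P by [].
have nzlc : P`_d != 0.
  by have := lead_coef_eq0 P; rewrite lead_coefE hdeg /= => ->; rewrite -size_poly_eq0 hdeg.
have hP' : size P^`() = d.
  have c0 : [pchar {poly C}] =i pred0 by move=> p; rewrite pchar_poly charC0.
  have nzc : P^`()`_d.-1 != 0.
    rewrite coef_deriv prednK // -mulr_natr mulf_eq0 negb_or nzlc /=.
    by move/pcharf0P: c0 => ->; rewrite -lt0n.
  apply/eqP; rewrite eqn_leq; apply/andP; split.
    have := @lt_size_deriv _ P; rewrite hdeg; apply.
    by rewrite -size_poly_eq0 hdeg.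
  rewrite leqNgt; apply/negP => hs; move: nzc; rewrite nth_default ?eqxx //.
  by rewrite -ltnS prednK.
set Sylv := Sylvester_mx P P^`().
have eR : map_poly iota (resultant P P^`()) = \det (map_mx (map_poly iota) Sylv).
  by rewrite det_map_mx.
have hA := @detA _ _ (map_mx (map_poly iota) Sylv) alpha.
have eSa : map_mx (horner_eval alpha) (map_mx (map_poly iota) Sylv) = map_mx phi Sylv.
  by apply/matrixP => i j; rewrite !mxE.
rewrite eSa -eR in hA.
set Sa := map_mx phi Sylv in hA.
set n := ((size P^`()).-1 + (size P).-1)%N in Sa hA.
have corank : (n - \rank Sa <= k)%N.
  rewrite leqNgt; apply/negP => hlt; apply: (negP hndiv).
  exact: dvdp_trans (dvdp_exp2l _ hlt) hA.
set g := gcdp Pa Pa^`().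
have hPa : Pa^`() = map_poly phi P^`() by rewrite ePa deriv_map.
have szPa : (size Pa <= d.+1)%N by rewrite -hdeg ePa; exact: size_poly.
have [g0|gn0] := eqVneq g 0.
  have Pa0 : Pa = 0 by move/eqP: g0; rewrite gcdp_eq0 => /andP[/eqP].
  have en : n = (d.-1 + d)%N by rewrite /n hP' hdeg.
  have hr : (\rank Sa <= 0)%N.
    apply: (@rankB L n n 0 Sa 0 (fun _ => 0)); first by move=> i; rewrite size_poly0.
    move=> i j.
    rewrite mulr0 coef0 /Sa mxE Sylvester_mxE; case: (split i) => l /=.
      case: leqP => _; rewrite ?mulr1n ?mulr0n ?rmorph0 //.
      by have := congr1 (fun p : {poly L} => p`_(j - l)) Pa0; rewrite ePa coef_map coef0.
    have Pa0' : Pa^`() = 0 by rewrite Pa0 deriv0.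
    case: leqP => _; rewrite ?mulr1n ?mulr0n ?rmorph0 //.
    by have := congr1 (fun p : {poly L} => p`_(j - l)) Pa0'; rewrite hPa coef_map coef0.
  rewrite /S Pa0 div0p size_poly0 /=.
  move: (\rank Sa) corank hr => r cor hr; rewrite en in cor; move: cor hr d_gt0; lia.
have Pan0 : Pa != 0.
  apply: contraNneq gn0 => Pa0; rewrite /g Pa0 deriv0 gcd0p //.
have gs1 : (0 < size g)%N by rewrite size_poly_gt0.
have gsPa : (size g <= size Pa)%N by apply: dvdp_leq => //; exact: dvdp_gcdl.
have szS : size S = (size Pa - (size g).-1)%N by rewrite /S size_divp.
pose h (i : 'I_n) := match split i with inl l => (Pa %/ g) * 'X^l | inr l => (Pa^`() %/ g) * 'X^l end.
have rk := @rankB L n n (size Pa + d.-1 - size g) Sa g h.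
have : (\rank Sa <= size Pa + d.-1 - size g)%N.
  apply: rk.
    move=> i; rewrite /h; case: splitP => l _.
      apply: leq_trans (size_polyMleq _ _) _; rewrite size_polyXn addnS /=.
      rewrite size_divp //.
      have := leq_trans (ltn_ord l) (eq_leq (congr1 predn hP')). move: gs1 gsPa; move: (size g) (size Pa) (nat_of_ord l) => a b c; lia.
    apply: leq_trans (size_polyMleq _ _) _; rewrite size_polyXn addnS /=.
    rewrite size_divp //.
    have := leq_trans (ltn_ord l) (eq_leq (congr1 predn hdeg)); rewrite /=.
    have := lt_size_deriv Pan0. move: gs1 gsPa; move: (size g) (size Pa) (size Pa^`()) (nat_of_ord l) => a b c e; lia.
  move=> i j; rewrite /h /Sa mxE Sylvester_mxE; case: (split i) => l /=.
    rewrite mulrA (mulrC g) divpK ?dvdp_gcdl // coefMXn ePa coef_map.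
    by case: leqP => hl; rewrite ?mulr1n ?mulr0n // !rmorph0.
  rewrite mulrA (mulrC g) divpK ?dvdp_gcdr // coefMXn hPa coef_map.
  by case: leqP => hl; rewrite ?mulr1n ?mulr0n // !rmorph0.
have en : n = (d.-1 + d)%N by rewrite /n hP' hdeg.
rewrite szS; move: (\rank Sa) corank => r cor hr; rewrite en in cor.
move: cor hr szPa gs1 gsPa d_gt0; move: (size g) (size Pa) => a b; lia.
Qed.
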